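(* Let $(X,\|\cdot,\cdot\|)$ be a $2$-normed space, $f:X\to X$, and $x_0\in X$. Suppose that for every sequence $(x_n)$ in $X$ which statistically converges to $x_0$, the sequence $(f(x_n))$ converges to $f(x_0)$. Then $f$ is a constant function.
   Context: A $2$-normed space is a real linear space $X$ with $\dim X>1$ together with a function $\|\cdot,\cdot\|:X^2\to\mathbb{R}$ such that for all $x,y,z\in X$, $\alpha\in\mathbb{R}$: (1) $\|x,y\|=0$ iff $x,y$ are linearly dependent; (2) $\|x,y\|=\|y,x\|$; (3) $\|\alpha x,y\|=|\alpha|\|x,y\|$; (4) $\|x,y+z\|\le\|x,y\|+\|x,z\|$. A sequence $(x_n)$ in $X$ converges to $x\in X$ if $\lim_{n\to\infty}\|x_n-x,z\|=0$ for every $z\in X$. A sequence $(x_k)$ in $X$ statistically converges to $L\in X$ if for every $\epsilon>0$ and every $z\in X$, $\lim_{n\to\infty}\frac1n|\{k\le n:\|x_k-L,z\|\ge\epsilon\}|=0$. *)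

(* Defs.v *)
From Stdlib Require Import Reals List.
Open Scope R_scope.

Record RLinSpace := {
  V :> Type;
  vadd : V -> V -> V;
  vzero : V;
  vopp : V -> V;
  vscal : R -> V -> V;
  vadd_assoc : forall x y z, vadd x (vadd y z) = vadd (vadd x y) z;
  vadd_comm : forall x y, vadd x y = vadd y x;
  vadd_0 : forall x, vadd x vzero = x;
  vadd_opp : forall x, vadd x (vopp x) = vzero;
  vscal_assoc : forall a b x, vscal a (vscal b x) = vscal (a * b) x;
  vscal_1 : forall x, vscal 1 x = x;
  vscal_distr_v : forall a x y, vscal a (vadd x y) = vadd (vscal a x) (vscal a y);
  vscal_distr_s : forall a b x, vscal (a + b) x = vadd (vscal a x) (vscal b x)
}.

Definition vsub (X : RLinSpace) (x y : X) : X := vadd X x (vopp X y).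

Definition lin_dep (X : RLinSpace) (x y : X) : Prop :=
  exists a b : R, (a <> 0 \/ b <> 0) /\ vadd X (vscal X a x) (vscal X b y) = vzero X.

Definition dim_gt1 (X : RLinSpace) : Prop :=
  exists x y : X, ~ lin_dep X x y.

Definition is_2norm (X : RLinSpace) (N : X -> X -> R) : Prop :=
  (forall x y, N x y = 0 <-> lin_dep X x y) /\
  (forall x y, N x y = N y x) /\
  (forall (a : R) x y, N (vscal X a x) y = Rabs a * N x y) /\
  (forall x y z, N x (vadd X y z) <= N x y + N x z).

Definition conv2 (X : RLinSpace) (N : X -> X -> R) (u : nat -> X) (l : X) : Prop :=
  forall z : X, Un_cv (fun n => N (vsub X (u n) l) z) 0.

Fixpoint count_lt (P : nat -> Prop) (dec : forall k, {P k} + {~ P k}) (n : nat) : nat :=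
  match n with
  | O => O
  | S m => (if dec m then 1 else 0) + count_lt P dec m
  end%nat.

Definition stat_conv2 (X : RLinSpace) (N : X -> X -> R) (u : nat -> X) (l : X) : Prop :=
  forall eps : R, eps > 0 -> forall z : X,
    Un_cv (fun n => INR (count_lt (fun k => N (vsub X (u k) l) z >= eps)
                                  (fun k => Rge_dec (N (vsub X (u k) l) z) eps)
                                  (S n)) / INR (S n)) 0.

(* Main.v *)
Require Import Defs.
From Stdlib Require Import Reals.
From Stdlib Require Import Lra Lia.
Open Scope R_scope.

Section LA.
Variable X : RLinSpace.

Lemma add_cancel_self (a : X) : vadd X a a = a -> a = vzero X.
Proof.
  intros H. transitivity (vadd X (vadd X a a) (vopp X a)).
  - rewrite <- vadd_assoc, vadd_opp, vadd_0; reflexivity.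
  - rewrite H; apply vadd_opp.
Qed.

Lemma scal0 (z : X) : vscal X 0 z = vzero X.
Proof. apply add_cancel_self; rewrite <- vscal_distr_s, Rplus_0_r; reflexivity. Qed.

Lemma scalv0 c : vscal X c (vzero X) = vzero X.
Proof. apply add_cancel_self; rewrite <- vscal_distr_v, vadd_0; reflexivity. Qed.

Lemma inv_unique (p q : X) : vadd X p q = vzero X -> q = vopp X p.
Proof.
  intros H. transitivity (vadd X (vopp X p) (vadd X p q)).
  - rewrite vadd_assoc, (vadd_comm X (vopp X p) p), vadd_opp, vadd_comm, vadd_0. reflexivity.
  - rewrite H, vadd_0; reflexivity.
Qed.

Lemma scal_opp a (w : X) : vscal X (-a) w = vopp X (vscal X a w).
Proof. apply inv_unique; rewrite <- vscal_distr_s, Rplus_opp_r; apply scal0. Qed.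

Lemma sub_zero_eq (x y : X) : vadd X x (vopp X y) = vzero X -> x = y.
Proof.
  intros H. transitivity (vadd X (vadd X x (vopp X y)) y).
  - rewrite <- vadd_assoc, (vadd_comm X (vopp X y) y), vadd_opp, vadd_0; reflexivity.
  - rewrite H, vadd_comm, vadd_0; reflexivity.
Qed.

Lemma dep_decomp (w a : X) : lin_dep X w a -> w = vzero X \/ exists c, a = vscal X c w.
Proof.
  intros [al [be [Hne H]]]. destruct (Req_dec be 0) as [Hb|Hb].
  - subst be. rewrite scal0, vadd_0 in H. left.
    assert (Ha : al <> 0) by (destruct Hne; lra).
    rewrite <- (vscal_1 X w), <- (Rinv_l al Ha), <- vscal_assoc, H, scalv0. reflexivity.
  - right. exists (-al/be). apply inv_unique in H.
    rewrite <- (vscal_1 X a), <- (Rinv_l be Hb), <- vscal_assoc, H, <- scal_opp, vscal_assoc.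
    f_equal. field. auto.
Qed.

Lemma all_dep_zero (w : X) : dim_gt1 X -> (forall z, lin_dep X w z) -> w = vzero X.
Proof.
  intros [a [b Hab]] Hw.
  destruct (dep_decomp w a (Hw a)) as [|[c Hc]]; auto.
  destruct (dep_decomp w b (Hw b)) as [|[d Hd]]; auto.
  exfalso; apply Hab. subst a b. destruct (Req_dec c 0).
  - subst c. exists 1, 0. split; [left; lra|]. rewrite !scal0, scalv0, vadd_0. reflexivity.
  - exists d, (-c). split; [right; lra|]. rewrite !vscal_assoc, <- vscal_distr_s.
    replace (d*c + -c*d) with 0 by ring. apply scal0.
Qed.
End LA.

Lemma count_mono (P Q : nat -> Prop) dp dq n :
  (forall k, P k -> Q k) -> (count_lt P dp n <= count_lt Q dq n)%nat.
Proof.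
  intros H. induction n; simpl; [lia|].
  destruct (dp n), (dq n); try lia. exfalso; auto.
Qed.

Definition sq (k : nat) : bool := Nat.eqb (Nat.sqrt k * Nat.sqrt k) k.

Lemma count_sq n :
  (count_lt (fun k => sq k = true) (fun k => Bool.bool_dec (sq k) true) (S n)
    <= S (Nat.sqrt n))%nat.
Proof.
  induction n.
  - simpl. destruct (Bool.bool_dec (sq 0) true); simpl; lia.
  - change (count_lt (fun k => sq k = true) (fun k => Bool.bool_dec (sq k) true) (S (S n)))
      with ((if Bool.bool_dec (sq (S n)) true then 1 else 0) +
            count_lt (fun k => sq k = true) (fun k => Bool.bool_dec (sq k) true) (S n))%nat.
    destruct (Bool.bool_dec (sq (S n)) true) as [e|e].
    + unfold sq in e. apply PeanoNat.Nat.eqb_eq in e.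
      pose proof (Nat.sqrt_spec n (le_0_n n)).
      assert (Nat.sqrt n < Nat.sqrt (S n))%nat by nia. lia.
    + pose proof (Nat.sqrt_le_mono n (S n) ltac:(lia)). lia.
Qed.

Lemma ratio_cv (c : nat -> nat) :
  (forall n, (c n <= S (Nat.sqrt n))%nat) -> Un_cv (fun n => INR (c n) / INR (S n)) 0.
Proof.
  intros Hc e He.
  destruct (archimed_cor1 (e*e/2)) as [M [HM HM0]]. { nra. }
  exists M. intros n Hn. unfold R_dist. rewrite Rminus_0_r.
  pose proof (Nat.sqrt_spec n (le_0_n n)) as [Hs _].
  set (s := Nat.sqrt n) in *.
  assert (Hc2 : (c n * c n <= 2 * S n)%nat) by (specialize (Hc n); assert (c n * c n <= S s * S s)%nat by (apply PeanoNat.Nat.mul_le_mono; lia); nia).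
  apply le_INR in Hc2. rewrite mult_INR, mult_INR in Hc2. simpl (INR 2) in Hc2.
  assert (Hy : 0 < INR (S n)) by (apply lt_0_INR; lia).
  assert (HMn : INR M < INR (S n)) by (apply lt_INR; lia).
  assert (HM' : 0 < INR M) by (apply lt_0_INR; lia).
  assert (Hye : INR (S n) * (e*e) > 2).
  { apply Rinv_lt_contravar in HMn; [|nra].
    assert (/ INR (S n) < e*e/2) by lra.
    apply (Rmult_lt_compat_l (INR (S n))) in H; [|lra].
    rewrite Rinv_r in H; lra. }
  assert (Hc0 : 0 <= INR (c n)) by apply pos_INR.
  rewrite Rabs_pos_eq.
  2: { apply Rmult_le_pos; [lra|]. left; apply Rinv_0_lt_compat; lra. }
  apply (Rmult_lt_reg_r (INR (S n))); [lra|].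
  unfold Rdiv. rewrite Rmult_assoc, Rinv_l by lra. rewrite Rmult_1_r.
  destruct (Rlt_le_dec (INR (c n)) (e * INR (S n))) as [h|h]; [lra|].
  exfalso. assert (INR (c n) * INR (c n) >= (e * INR (S n)) * (e * INR (S n))) by (apply Rle_ge, Rmult_le_compat; nra).
  nra.
Qed.

Theorem theorem3p2 (X : RLinSpace) (N : X -> X -> R)
  (HdimX : dim_gt1 X) (HN : is_2norm X N) (f : X -> X) (x0 : X) :
  (forall u : nat -> X, stat_conv2 X N u x0 -> conv2 X N (fun n => f (u n)) (f x0)) ->
  forall x y : X, f x = f y.
Proof.
  intros Hf.
  destruct HN as [HN0 [HNs [HNsc HNt]]].
  assert (Hall : forall x, f x = f x0).
  { intros x.
    set (u := fun k => if sq k then x else x0).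
    assert (Hst : stat_conv2 X N u x0).
    { intros eps He z. apply ratio_cv. intros n.
      eapply PeanoNat.Nat.le_trans; [|apply count_sq].
      apply count_mono. intros k Hk. destruct (sq k) eqn:E; auto.
      exfalso. unfold u in Hk. rewrite E in Hk. unfold vsub in Hk.
      rewrite vadd_opp in Hk.
      assert (N (vzero X) z = 0).
      { apply HN0. exists 1, 0. split; [left; lra|].
        rewrite scal0, scalv0, vadd_0. reflexivity. }
      lra. }
    specialize (Hf u Hst).
    apply sub_zero_eq. apply (all_dep_zero X); auto. intros z. apply HN0.
    specialize (Hf z).
    destruct (Req_dec (N (vsub X (f x) (f x0)) z) 0) as [h|h]; auto. exfalso.
    destruct (Hf (Rabs (N (vsub X (f x) (f x0)) z))) as [M HM].
    { apply Rabs_pos_lt; auto. }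
    specialize (HM (S M * S M)%nat ltac:(nia)).
    unfold u in HM.
    assert (sq (S M * S M) = true).
    { unfold sq. rewrite Nat.sqrt_square. apply PeanoNat.Nat.eqb_refl. }
    rewrite H in HM. unfold R_dist in HM. rewrite Rminus_0_r in HM. lra. }
  intros x y. rewrite (Hall x), (Hall y). reflexivity.
Qed.
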